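(* Let $d\ge2$, $j\in[d-1]$, $R$ an abelian group, and let $\mathcal S$ be the support of a $j$-cocycle $f$ (with coefficients in $R$) in a $d$-dimensional simplicial complex $\mathcal G$. For a simplex $K$ let $\mathcal S_K$ denote the set of $j$-simplices of $\mathcal S$ contained in $K$. Then for each $k$ with $j+1\le k\le d$ and each $k$-simplex $K$ of $\mathcal G$: (i) either $\mathcal S_K=\emptyset$, or both $|\mathcal S_K|\ge k-j+1$ and $\bigcup_{\sigma\in\mathcal S_K}\sigma=K$; (ii) if $|\mathcal S_K|=k-j+1$, then $\mathcal S_K$ forms a $j$-flower in $K$.
   Context: A $j$-cochain assigns to each ordered $j$-simplex a value in $R$, changing sign under swapping two vertices; its support is the set of unordered $j$-simplices with nonzero value; it is a $j$-cocycle if $\sum_{i=0}^{j+1}(-1)^if([v_0,\dots,\hat v_i,\dots,v_{j+1}])=0_R$ for every ordered $(j+1)$-simplex $[v_0,\dots,v_{j+1}]$. $i$-simplices are members of size $i+1$; $d$-dimensional means no $(d+1)$-simplices. Given a $k$-simplex $K$ with $j\le k\le d$, a collection $\{P_0,\dots,P_{k-j}\}$ of $j$-simplices forms a $j$-flower in $K$ if $K=\bigcup_iP_i$ and there is a set $C$ with $|C|=j$ contained in every $P_i$. *)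

(* Defs.v *)
From mathcomp Require Import all_boot all_algebra.
Set Implicit Arguments. Unset Strict Implicit. Unset Printing Implicit Defensive.
Import GRing.Theory.
Local Open Scope ring_scope.

(* Simplicial complexes on a finite vertex type V, given as a family of vertex
   sets; an i-simplex is a member of size i+1. *)
Definition simplicial_complex (V : finType) (G : {set {set V}}) : Prop :=
  forall K L : {set V}, K \in G -> L \subset K -> L != set0 -> L \in G.

Definition dimension_le (V : finType) (G : {set {set V}}) (d : nat) : Prop :=
  forall K, K \in G -> (#|K| <= d.+1)%N.

Definition ordered_simplex (V : finType) (G : {set {set V}}) (i : nat) (s : seq V) : bool :=
  [&& uniq s, size s == i.+1 & [set x in s] \in G].

Definition swap_seq (V : finType) (s : seq V) (a b : nat) : seq V :=
  match s with
  | [::] => [::]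
  | x0 :: _ => set_nth x0 (set_nth x0 s a (nth x0 s b)) b (nth x0 s a)
  end.

Definition drop_at (V : finType) (s : seq V) (i : nat) : seq V :=
  take i s ++ drop i.+1 s.

Definition cochain (V : finType) (R : zmodType) (G : {set {set V}}) (j : nat)
  (f : seq V -> R) : Prop :=
  forall s a b, ordered_simplex G j s -> (a < b < size s)%N ->
    f (swap_seq s a b) = - f s.

Definition cocycle (V : finType) (R : zmodType) (G : {set {set V}}) (j : nat)
  (f : seq V -> R) : Prop :=
  cochain G j f /\
  forall s, ordered_simplex G j.+1 s ->
    \sum_(i < j.+2) (if odd i then - f (drop_at s i) else f (drop_at s i)) = 0.

Definition cochain_support (V : finType) (R : zmodType) (G : {set {set V}}) (j : nat)
  (f : seq V -> R) : {set {set V}} :=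
  [set sigma in G | (#|sigma| == j.+1) &&
     [exists t : (j.+1).-tuple V, uniq t && ([set x in t] == sigma) && (f t != 0)]].

Definition restrict_to (V : finType) (S : {set {set V}}) (K : {set V}) : {set {set V}} :=
  [set sigma in S | sigma \subset K].

Definition flower (V : finType) (j : nat) (K : {set V}) (P : {set {set V}}) : Prop :=
  [/\ #|P| = (#|K|.-1 - j).+1,
      (forall p, p \in P -> #|p| = j.+1),
      \bigcup_(p in P) p = K &
      exists C : {set V}, #|C| = j /\ forall p, p \in P -> C \subset p].

(* Main.v *)
Require Import Defs.
From mathcomp Require Import all_boot all_algebra.
From mathcomp Require Import zify.
Set Implicit Arguments. Unset Strict Implicit. Unset Printing Implicit Defensive.
Import GRing.Theory.
Lemma L1 (V : finType) (R : zmodType) (G : {set {set V}}) (j : nat)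
  (f : seq V -> R) (K : {set V}) (s : {set V}) (v : V) :
  simplicial_complex G -> cocycle G j f -> K \in G ->
  s \in cochain_support G j f -> s \subset K -> v \in K -> v \notin s ->
  exists2 t, t \in cochain_support G j f & (v \in t) && (t \subset v |: s).
Proof.
move=> HG Hc HK.
rewrite inE => /andP[sG /andP[_ /existsP[t /andP[/andP[ut /eqP ts] ft]]]] sK vK vs.
have vt : v \notin (t : seq V) by move: vs; rewrite -ts inE.
have tK : forall x, x \in (t : seq V) -> x \in K.
  by move=> x xt; apply: (subsetP sK); rewrite -ts inE.
set u := v :: (t : seq V).
have uG : ordered_simplex G j.+1 u.
  rewrite /ordered_simplex /= vt ut size_tuple eqxx /=.
  apply: (HG K) => //.
    apply/subsetP => x; rewrite inE in_cons => /orP[/eqP->|xt] //; exact: tK.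
  by apply/set0Pn; exists v; rewrite inE mem_head.
have := (proj2 Hc) u uG.
rewrite big_ord_recl /=.
have -> : drop_at u 0 = t by rewrite /drop_at /= drop0.
case: (boolP [exists i : 'I_j.+1, f (drop_at u (lift ord0 i)) != 0]%R); last first.
  rewrite negb_exists => /forallP H0.
  rewrite big1 ?addr0 => [ft0|i _]; first by rewrite ft0 eqxx in ft.
  by move: (H0 i); rewrite negbK => /eqP ->; rewrite oppr0 if_same.
move=> /existsP[i fi] _.
have E : drop_at u (lift ord0 i) = v :: drop_at t i by [].
rewrite E in fi.
have sub : subseq (drop_at t i) t.
  rewrite /drop_at -{3}(cat_take_drop i t); apply: cat_subseq => //.
  rewrite -add1n -drop_drop; exact: drop_subseq.
set w := v :: drop_at t i.
have uw : uniq w.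
  rewrite /w /= (subseq_uniq sub ut) andbT.
  by apply: contra vt; apply: (mem_subseq sub).
have szw : size w == j.+1.
  rewrite /w /= /drop_at size_cat size_take size_drop size_tuple ltn_ord.
  by apply/eqP; have := ltn_ord i; lia.
exists [set x in w].
- rewrite inE; apply/and3P; split.
  + apply: (HG K) => //.
      apply/subsetP => x; rewrite inE in_cons => /orP[/eqP->|xt] //.
      by apply: tK; apply: (mem_subseq sub).
    by apply/set0Pn; exists v; rewrite inE mem_head.
  + by rewrite cardsE (card_uniqP uw).
  + apply/existsP; exists (Tuple szw); rewrite /= -/w -[_ && uniq _]/(uniq w) uw eqxx fi.
    done.
- rewrite inE mem_head /=; apply/subsetP => x; rewrite !inE.
  case/orP=> [->|xt] //; rewrite -ts inE (mem_subseq sub xt) orbT //.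
Qed.
Lemma comb (V : finType) (S : {set {set V}}) (j k : nat) (K : {set V}) :
 (forall s, s \in S -> #|s| = j.+1) ->
 (forall s v, s \in S -> s \subset K -> v \in K -> v \notin s ->
    exists2 t, t \in S & (v \in t) && (t \subset v |: s)) ->
 (j.+1 <= k)%N -> #|K| = k.+1 ->
 let SK := restrict_to S K in
 (SK = set0 \/ ((k - j).+1 <= #|SK|)%N /\ \bigcup_(s in SK) s = K) /\
 (#|SK| = (k - j).+1 -> flower j K SK).
Proof.
move=> Hsz HL Hjk HK SK.
have HLK : forall s v, s \in SK -> v \in K -> v \notin s ->
    exists2 t, t \in SK & (v \in t) && (t \subset v |: s).
  move=> s v; rewrite inE => /andP[sS sK] vK vs.
  have [t tS /andP[vt ts]] := HL s v sS sK vK vs.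
  exists t; last by rewrite vt ts.
  by rewrite inE tS; apply: subset_trans ts _; rewrite subUset sub1set vK sK.
have SKsz : forall s, s \in SK -> #|s| = j.+1.
  by move=> s; rewrite inE => /andP[/Hsz].
have SKK : forall s, s \in SK -> s \subset K.
  by move=> s; rewrite inE => /andP[].
have [->|/set0Pn[sg sgS]] := eqVneq SK set0.
  by split; [left | rewrite cards0].
set g := fun v => odflt set0 [pick t in SK | (v \in t) && (t \subset v |: sg)].
have gP : forall v, v \in K :\: sg -> [/\ g v \in SK, v \in g v & g v \subset v |: sg].
  move=> v; rewrite inE => /andP[vs vK]; rewrite /g; case: pickP.
    by move=> t /andP[tS /andP[vt ts]].
  move=> none; have [t tS vts] := HLK sg v sgS vK vs.
  by have := none t; rewrite tS vts.
have ginj : {in K :\: sg &, injective g}.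
  move=> v w vD wD E; have [_ vg _] := gP v vD; have [_ _ wg] := gP w wD.
  rewrite E in vg; move: (subsetP wg v vg); rewrite !inE => /orP[/eqP //|vs].
  by move: vD; rewrite inE vs.
have gsub : g @: (K :\: sg) \subset SK :\ sg.
  apply/subsetP => _ /imsetP[v vD ->]; have [gS vg _] := gP v vD.
  rewrite in_setD1 gS andbT; apply/eqP => E; move: vD; rewrite inE -E vg.
  done.
have cardD : #|K :\: sg| = (k - j)%N.
  by rewrite cardsD (setIidPr (SKK _ sgS)) HK (SKsz _ sgS).
have cardS1 : #|SK| = (#|SK :\ sg|).+1 by rewrite (cardsD1 sg SK) sgS.
have cimg : #|g @: (K :\: sg)| = (k - j)%N by rewrite card_in_imset // cardD.
have cov : \bigcup_(s in SK) s = K.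
  apply/eqP; rewrite eqEsubset; apply/andP; split.
    by apply/bigcupsP => s /SKK.
  apply/subsetP => x xK; apply/bigcupP; case: (boolP (x \in sg)) => xs.
    by exists sg.
  have xD : x \in K :\: sg by rewrite inE xs xK.
  by have [gS xg _] := gP x xD; exists (g x).
split.
  right; split => //; rewrite cardS1 ltnS -cimg; exact: subset_leq_card.
move=> hc.
have img : SK :\ sg = g @: (K :\: sg).
  apply/eqP; rewrite eq_sym eqEcard gsub /= cimg.
  by move: hc; rewrite cardS1 => -[->].
have /card_gt0P[v0 v0D] : (0 < #|K :\: sg|)%N by rewrite cardD subn_gt0.
have [t0S v0t0 t0s] := gP v0 v0D.
set C := g v0 :\ v0.
have Cs : C \subset sg.
  apply/subsetP => x; rewrite !inE => /andP[xv0 xt0].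
  by move: (subsetP t0s x xt0); rewrite !inE (negbTE xv0).
have cC : #|C| = j.
  by have := cardsD1 v0 (g v0); rewrite v0t0 (SKsz _ t0S) => -[].
split.
- by rewrite HK hc.
- exact: SKsz.
- exact: cov.
exists C; split => // p pS.
case: (eqVneq p sg) => [->//|pns].
have : p \in SK :\ sg by rewrite in_setD1 pns pS.
rewrite img => /imsetP[w wD ->].
case: (eqVneq w v0) => [->|wv0]; first exact: subsetDl.
have [wS wg wgs] := gP w wD.
have ws : w \notin sg by move: wD; rewrite inE => /andP[].
have wK : w \in K by move: wD; rewrite inE => /andP[].
have wt0 : w \notin g v0.
  by apply/negP => /(subsetP t0s); rewrite !inE (negbTE wv0) (negbTE ws).
have [r rS /andP[wr rs]] := HLK (g v0) w t0S wK wt0.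
have : r \in SK :\ sg.
  by rewrite in_setD1 rS andbT; apply/eqP => E; move: ws; rewrite -E wr.
rewrite img => /imsetP[w' w'D E].
have [_ _ w'gs] := gP w' w'D.
have ww' : w = w'.
  by move: (subsetP w'gs w); rewrite -E !inE wr (negbTE ws) orbF => /(_ isT)/eqP.
subst w'.
have rC : r \subset w |: C.
  apply/subsetP => x xr; move: (subsetP rs x xr); rewrite !inE.
  case/orP=> [->//|xt0]; rewrite xt0 andbT; apply/orP; right.
  apply/eqP => xv0; subst x.
  move: (subsetP wgs v0); rewrite -E xr !inE => /(_ isT) /orP[/eqP/esym|].
    by apply/eqP.
  by move: v0D; rewrite inE => /andP[/negbTE ->].
have wC : w \notin C by apply: contra ws; apply: (subsetP Cs).
have : r == w |: C.
  by rewrite eqEcard rC /= cardsU1 wC cC (SKsz _ rS) add1n.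
by move/eqP => Er; rewrite -E Er subsetUr.
Qed.

Theorem lemma4p10 (V : finType) (R : zmodType) (G : {set {set V}}) (d j : nat)
  (f : seq V -> R) :
  simplicial_complex G -> dimension_le G d ->
  (2 <= d)%N -> (1 <= j)%N -> (j <= d - 1)%N ->
  cocycle G j f ->
  forall (k : nat) (K : {set V}), (j.+1 <= k)%N -> (k <= d)%N ->
    K \in G -> #|K| = k.+1 ->
    let SK := restrict_to (cochain_support G j f) K in
    (SK = set0 \/ ((k - j).+1 <= #|SK|)%N /\ \bigcup_(s in SK) s = K) /\
    (#|SK| = (k - j).+1 -> flower j K SK).
Proof.
move=> HG _ _ _ _ Hc k K Hjk _ HK cK.
apply: comb => //.
  by move=> s; rewrite inE => /and3P[_ /eqP].
by move=> s v sS sK vK vs; apply: (L1 HG Hc HK sS sK vK vs).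
Qed.
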